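(* Let $n$ be a positive integer and let $\mathcal{H}_{DL;n}$ be the class of decision lists over $n$ Boolean variables. For any $\epsilon\in(2^{-n},1)$, the class $\mathcal{H}_{DL;n}$ is $\left(\min\left\{\frac{1}{200n^4},\epsilon\right\},\epsilon\right)$-separable.
   Context: The domain is $\mathcal{X}=\{0,1\}^n$. A decision list is a function $\mathcal{X}\to\{0,1\}$ of the form ''if $\ell_1$ then $b_1$ else if $\ell_2$ then $b_2$ $\ldots$ else if $\ell_k$ then $b_k$ else $b_{k+1}$'', where $\ell_1,\ldots,\ell_k$ are literals (variables $x_r$ or their negations) over the $n$ variables and $b_1,\ldots,b_{k+1}\in\{0,1\}$; $\mathcal{H}_{DL;n}$ is the set of all such functions. For a class $\mathcal{H}$ over finite domain $\mathcal{X}$, the hypotheses graph is bipartite with parts $\mathcal{H}$ and $\mathcal{X}$, $h$ adjacent to $x$ iff $h(x)=1$. For $S\subseteq\mathcal{X}$, $T\subseteq\mathcal{H}$, $d(S,T)=\frac{e(S,T)}{|S||T|}$ with $e(S,T)$ the number of edges between $S$ and $T$. Hypotheses $h_1,h_2$ are $\epsilon$-close if $|\{x\in\mathcal{X}: h_1(x)\ne h_2(x)\}|\le\epsilon|\mathcal{X}|$; $B_h(\epsilon)$ is the set of hypotheses $\epsilon$-close to $h$. $T\subseteq\mathcal{H}$ is $(\alpha,\epsilon)$-tight if some $h$ has $|T\cap B_h(\epsilon)|\ge\alpha|T|$. $\mathcal{H}$ is $(\alpha,\epsilon)$-separable if for every $T\subseteq\mathcal{H}$ that is not $(\alpha,\epsilon)$-tight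 there exist $S\subseteq\mathcal{X}$ and disjoint $T_0,T_1\subseteq T$ with $|S|\ge\alpha|\mathcal{X}|$, $|T_0|,|T_1|\ge\alpha|T|$ and $|d(S,T_0)-d(S,T_1)|\ge\alpha$. *)

(* Defs.v *)
From mathcomp Require Import all_boot all_order all_algebra.
From mathcomp Require Import reals.
Set Implicit Arguments. Unset Strict Implicit. Unset Printing Implicit Defensive.
Import Order.TTheory GRing.Theory Num.Theory.
Local Open Scope ring_scope.

Notation cube n := {ffun 'I_n -> bool}.

Notation hyp X := {ffun X -> bool}.

(* Decision lists: a list of triples (r, s, b), meaning
   "if literal (x_r = s) then b", followed by a default bit.
   Literal (r, true) is x_r, literal (r, false) is the negation of x_r. *)
Definition eval_dl (n : nat) (l : seq ('I_n * bool * bool)) (bd : bool)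
  (x : cube n) : bool :=
  foldr (fun t rest => if x t.1.1 == t.1.2 then t.2 else rest) bd l.

Definition is_DL (n : nat) (h : hyp (cube n)) : Prop :=
  exists (l : seq ('I_n * bool * bool)) (bd : bool), forall x, h x = eval_dl l bd x.

Section Generic.
Variables (R : realType) (X : finType).

Definition edges (S : {set X}) (T : {set hyp X}) : nat :=
  #|[set p : X * hyp X | [&& p.1 \in S, p.2 \in T & p.2 p.1]]|.

Definition density (S : {set X}) (T : {set hyp X}) : R :=
  (edges S T)%:R / (#|S|%:R * #|T|%:R).

Definition eps_close (eps : R) (h1 h2 : hyp X) : bool :=
  (#|[set x : X | h1 x != h2 x]|%:R <= eps * #|X|%:R)%R.

(* T is (alpha,eps)-tight w.r.t. class C: some h in C has
   |T ∩ B_h(eps)| >= alpha |T|, where B_h(eps) = hypotheses of C eps-close to h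
   (T is a subset of C, so intersecting with C is automatic). *)
Definition tight (C : hyp X -> Prop) (alpha eps : R) (T : {set hyp X}) : Prop :=
  exists h, C h /\
    (alpha * #|T|%:R <= #|[set g in T | eps_close eps h g]|%:R)%R.

Definition separable (C : hyp X -> Prop) (alpha eps : R) : Prop :=
  forall T : {set hyp X}, (forall g, g \in T -> C g) ->
    ~ tight C alpha eps T ->
    exists (S : {set X}) (T0 T1 : {set hyp X}),
      [/\ T0 \subset T, T1 \subset T & [disjoint T0 & T1]] /\
      [/\ alpha * #|X|%:R <= #|S|%:R,
          alpha * #|T|%:R <= #|T0|%:R,
          alpha * #|T|%:R <= #|T1|%:R &
          alpha <= `|density S T0 - density S T1| ]%R.
End Generic.

(* Main.v *)
Require Import Defs.
From mathcomp Require Import all_boot all_order all_algebra.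
From mathcomp Require Import reals.
From mathcomp Require Import ring lra zify.
Set Implicit Arguments. Unset Strict Implicit. Unset Printing Implicit Defensive.
Import Order.TTheory GRing.Theory Num.Theory.

Section Comb.
Variable n : nat.
Local Notation X := (cube n).
Local Notation H := (hyp X).
Implicit Types (p : seq ('I_n * bool * bool)) (x : X).

Lemma eval_cat p q bd x : eval_dl (p ++ q) bd x = eval_dl p (eval_dl q bd x) x.
Proof. by rewrite /eval_dl foldr_cat. Qed.

Definition fall p x := all (fun t => x t.1.1 != t.1.2) p.

Lemma eval_fall p z x : fall p x -> eval_dl p z x = z.
Proof. elim: p => //= t p IH /andP[/negbTE -> /IH]; done. Qed.

Lemma eval_nfall p z z' x : ~~ fall p x -> eval_dl p z x = eval_dl p z' x.
Proof.
elim: p => //= t p IH; rewrite negb_and negbK.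
by case: (x t.1.1 == t.1.2) => //= /IH ->.
Qed.

Definition flip (r : 'I_n) x : X := [ffun i => if i == r then ~~ x i else x i].

Lemma flipK r : involutive (flip r).
Proof. by move=> x; apply/ffunP => i; rewrite !ffunE; case: eqP => // _; rewrite negbK. Qed.

Definition iscube (C : {set X}) (F : {set 'I_n}) :=
  (forall x r, r \in F -> (flip r x \in C) = (x \in C)) /\
  (forall x y r, x \in C -> y \in C -> r \notin F -> x r = y r).

Lemma half_card C F r s : iscube C F -> r \in F ->
  #|[set x in C | x r == s]| = #|[set x in C | x r != s]|.
Proof.
move=> [H1 _] rF.
have -> : [set x in C | x r != s] = flip r @: [set x in C | x r == s].
  apply/setP => y; apply/idP/imsetP.
  - rewrite inE => /andP[yC ys]; exists (flip r y); last by rewrite flipK.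
    by rewrite inE H1 // yC ffunE eqxx; case: s ys; case: (y r).
  - case=> x; rewrite !inE => /andP[xC /eqP xs] ->.
    by rewrite H1 // xC ffunE eqxx xs; case: s {xs}.
by rewrite card_imset //; apply: (can_inj (flipK r)).
Qed.

Lemma half_card2 C F r s : iscube C F -> r \in F ->
  #|C| = (2 * #|[set x in C | x r != s]|)%N.
Proof.
move=> cC rF; rewrite -(cardsID [set x : X | x r == s] C).
have -> : C :&: [set x : X | x r == s] = [set x in C | x r == s].
  by apply/setP => x; rewrite !inE.
have -> : C :\: [set x : X | x r == s] = [set x in C | x r != s].
  by apply/setP => x; rewrite !inE andbC.
by rewrite (half_card s cC rF) mul2n addnn.
Qed.

Lemma dl_free (l : seq ('I_n * bool * bool)) bd C F r0 : iscube C F -> r0 \in F ->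
  exists t : 'I_n * bool * bool, (t.1.1 \in F) &&
    [forall x, (x \in C) && (x t.1.1 == t.1.2) ==> (eval_dl l bd x == t.2)].
Proof.
move=> [_ H2] r0F; elim: l => [|[[r s] b] l [t /andP[tF /forallP Ht]]].
  by exists (r0, true, bd); rewrite r0F /=; apply/forallP => x; apply/implyP.
case rF: (r \in F).
  exists (r, s, b); rewrite rF /=; apply/forallP => x; apply/implyP => /andP[_ ->].
  by [].
case: (boolP [exists x0, (x0 \in C) && (x0 r == s)]).
  move=> /existsP[x0 /andP[x0C /eqP x0s]].
  exists (r0, true, b); rewrite r0F /=; apply/forallP => x; apply/implyP => /andP[xC _].
  by rewrite (H2 x x0 r xC x0C) ?rF // x0s eqxx.
move=> Hn; exists t; rewrite tF /=; apply/forallP => x; apply/implyP => /andP[xC xt].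
have : x r != s.
  apply/negP => xs; move/negP: Hn; apply; apply/existsP; exists x; by rewrite xC xs.
by move/negbTE => -> /=; move: (Ht x); rewrite xC xt.
Qed.

Lemma pigeon (K : finType) (k0 : K) (A : {set H}) (P : H -> K -> bool) :
  (forall g, g \in A -> exists k, P g k) ->
  exists k, #|A| <= #|K| * #|[set g in A | P g k]|.
Proof.
move=> HA.
have H1 : #|A| <= \sum_k #|[set g in A | P g k]|.
  rewrite -sum1_card.
  apply: (@leq_trans (\sum_(g in A) \sum_k (P g k : nat))).
    apply: leq_sum => g gA; case: (HA g gA) => k Pk.
    by rewrite (bigD1 k) //= Pk.
  rewrite exchange_big; apply: leq_sum => k _.
  rewrite -sum1_card [in X in X <= _]big_mkcond [in X in _ <= X]big_mkcond /=.
  apply: leq_sum => g _; rewrite inE; by case: (g \in A); case: (P g k).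
case: (@arg_maxnP K k0 xpredT (fun k => #|[set g in A | P g k]|)) => // k _ Hk.
exists k; apply: (leq_trans H1).
rewrite -sum_nat_const; apply: leq_sum => j _; exact: Hk.
Qed.

End Comb.

Section Edges.
Variable n : nat.
Local Notation X := (cube n).
Local Notation H := (hyp X).

Lemma edges_sum (S : {set X}) (T0 : {set H}) :
  edges S T0 = \sum_(g in T0) #|[set x in S | g x]|.
Proof.
rewrite /edges -sum1_card big_mkcond /=.
transitivity (\sum_(x : X) \sum_(g : H) if (x \in S) && (g \in T0) && g x then 1 else 0)%N.
  rewrite pair_big /=; apply: eq_bigr => -[x g] _; by rewrite inE andbA.
rewrite (exchange_big_dep xpredT) //= [in RHS]big_mkcond /=; apply: eq_bigr => g _.
case gT: (g \in T0); last by rewrite big1 // => x _; rewrite andbF.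
rewrite -sum1_card [in RHS]big_mkcond /=; apply: eq_bigr => x _.
by rewrite inE andbT.
Qed.
End Edges.

Local Open Scope ring_scope.

Section Test.
Variables (R : realType) (n : nat).
Local Notation X := (cube n).
Local Notation H := (hyp X).

Definition mis (S : {set X}) (b : bool) (g : H) := #|[set x in S | g x != b]|.

Lemma ones_mis (S : {set X}) (g : H) :
  (#|[set x in S | g x]| + mis S true g)%N = #|S|.
Proof.
rewrite /mis -(cardsID [set x : X | g x] S); congr (_ + _)%N;
  apply: eq_card => x; rewrite !inE; case: (g x); by rewrite ?andbT ?andbF.
Qed.

Lemma ones_mis0 (S : {set X}) (g : H) : #|[set x in S | g x]| = mis S false g.
Proof. by rewrite /mis; apply: eq_card => x; rewrite !inE; case: (g x). Qed.

Lemma testZ (T A : {set H}) (S : {set X}) (b : bool) (a : R) :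
  0 < a -> A \subset T -> a * #|X|%:R <= #|S|%:R -> a * #|T|%:R <= #|A|%:R ->
  (0 < #|T|)%N ->
  (forall g, g \in A -> forall x, x \in S -> g x = b) ->
  a * #|T|%:R <= #|[set g in T | a * #|S|%:R <= (mis S b g)%:R]|%:R ->
  exists (S0 : {set X}) (T0 T1 : {set H}),
      [/\ T0 \subset T, T1 \subset T & [disjoint T0 & T1]] /\
      [/\ a * #|X|%:R <= #|S0|%:R,
          a * #|T|%:R <= #|T0|%:R,
          a * #|T|%:R <= #|T1|%:R &
          a <= `|density R S0 T0 - density R S0 T1| ].
Proof.
move=> a0 AT HS HA T0 HAb HE.
set E := [set g in T | _] in HE.
have ET : E \subset T by apply/subsetP => g; rewrite inE => /andP[].
have HEm : forall g, g \in E -> a * #|S|%:R <= (mis S b g)%:R.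
  by move=> g; rewrite inE => /andP[].
clearbody E.
have X0 : (0 < #|X|)%N by rewrite card_ffun card_bool expn_gt0.
have S0 : 0 < #|S|%:R :> R.
  apply: lt_le_trans HS; apply: mulr_gt0 => //; by rewrite ltr0n.
have TR : 0 < #|T|%:R :> R by rewrite ltr0n.
have A0 : 0 < #|A|%:R :> R by apply: lt_le_trans HA; apply: mulr_gt0.
have E0 : 0 < #|E|%:R :> R by apply: lt_le_trans HE; apply: mulr_gt0.
exists S, A, E; split; first split => //.
- rewrite -setI_eq0; apply/eqP/setP => g; rewrite !inE; apply/negP => /andP[gA /HEm].
  have -> : mis S b g = 0%N.
    rewrite /mis; apply/eqP; rewrite cards_eq0; apply/eqP/setP => x.
    by rewrite !inE; case xS: (x \in S) => //=; rewrite (HAb g gA x xS) eqxx.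
  have : 0 < a * #|S|%:R by apply: mulr_gt0.
  move=> h1 h2; lra.
split => //.
have edA : (edges S A)%:R = #|A|%:R * (if b then #|S|%:R else 0) :> R.
  rewrite edges_sum natr_sum (eq_bigr (fun _ => if b then #|S|%:R else 0)).
    by rewrite sumr_const mulr_natl.
  move=> g gA; case: b HAb HEm => HAb HEm.
    by congr (_%:R); apply: eq_card => x; rewrite !inE; case xS: (x \in S); rewrite ?(HAb g gA x xS).
  rewrite ones_mis0 /mis; apply/eqP; rewrite pnatr_eq0 cards_eq0; apply/eqP/setP => x.
  by rewrite !inE; case xS: (x \in S) => //=; rewrite (HAb g gA x xS).
rewrite /density edA.
case: b HAb HEm edA => HAb HEm edA.
- have -> : #|A|%:R * #|S|%:R / (#|S|%:R * #|A|%:R) = 1 :> R.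
    by rewrite (mulrC #|A|%:R) divff // mulf_neq0 // gt_eqF.
  have Hd : (edges S E)%:R / (#|S|%:R * #|E|%:R) <= 1 - a.
    rewrite ler_pdivrMr ?mulr_gt0 // edges_sum natr_sum.
    rewrite (_ : (1 - a) * _ = \sum_(g in E) (#|S|%:R - a * #|S|%:R)); last first.
      by rewrite sumr_const -mulr_natr; ring.
    apply: ler_sum => g /HEm Hg.
    have := ones_mis S g; move/(congr1 (fun m => m%:R : R)); rewrite natrD => Ho.
    lra.
  rewrite ler_normr; apply/orP; left; lra.
- have -> : #|A|%:R * 0 / (#|S|%:R * #|A|%:R) = 0 :> R by rewrite mulr0 mul0r.
  have Hd : a <= (edges S E)%:R / (#|S|%:R * #|E|%:R).
    rewrite ler_pdivlMr ?mulr_gt0 // edges_sum natr_sum.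
    rewrite (_ : a * _ = \sum_(g in E) (a * #|S|%:R)); last first.
      by rewrite sumr_const -mulr_natr; ring.
    apply: ler_sum => g /HEm Hg.
    by rewrite ones_mis0.
  rewrite sub0r normrN ler_normr; apply/orP; left; lra.
Qed.
End Test.

Section Main.
Variables (R : realType) (n : nat) (T : {set hyp (cube n)}) (a eps : R).
Local Notation X := (cube n).
Local Notation H := (hyp X).
Hypotheses (n0 : (0 < n)%N) (a0 : 0 < a) (aeps : a <= eps)
  (asmall : (36 * n ^ 2)%N%:R * a <= 1)
  (HT : forall g, g \in T -> is_DL g) (T0 : (0 < #|T|)%N).

Lemma cardX : #|X| = (2 ^ n)%N.
Proof. by rewrite card_ffun card_bool card_ord. Qed.

Lemma a4 : (4 * n)%N%:R * a <= 1.
Proof.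
apply: le_trans asmall; apply: ler_wpM2r; first exact: ltW.
rewrite ler_nat expnS expn1 mulnA leq_mul2r; apply/orP; right; lia.
Qed.

Definition mism p (g : H) :=
  #|[set x : X | ~~ fall p x & g x != eval_dl p false x]|.

Definition SEP := exists (S0 : {set X}) (T0 T1 : {set H}),
      [/\ T0 \subset T, T1 \subset T & [disjoint T0 & T1]] /\
      [/\ a * #|X|%:R <= #|S0|%:R,
          a * #|T|%:R <= #|T0|%:R,
          a * #|T|%:R <= #|T1|%:R &
          a <= `|density R S0 T0 - density R S0 T1| ].

Definition state (d : nat) := exists p (C : {set X}) (F : {set 'I_n}) (G : {set H}),
  [/\ C = [set x | fall p x], iscube C F, #|F| = d, #|C| = (2 ^ d)%N & G \subset T] /\
  (#|T|%:R <= (4 * n)%N%:R * (#|G|%:R + a * #|T|%:R * (n - d)%N%:R)) /\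
  (forall g, g \in G -> (mism p g)%:R <= a * ((2 ^ n.-1)%N%:R - (2 ^ d)%N%:R)).

Lemma DLclass (C : {set X}) (F : {set 'I_n}) r0 g : iscube C F -> r0 \in F -> g \in T ->
  exists k : 'I_n * bool * bool, (k.1.1 \in F) &&
    [forall x, (x \in C) && (x k.1.1 == k.1.2) ==> (g x == k.2)].
Proof.
move=> cC r0F /HT [l [bd Hg]].
case: (dl_free l bd cC r0F) => t /andP[tF /forallP Ht].
exists t; rewrite tF /=; apply/forallP => x; rewrite Hg; exact: Ht.
Qed.

Lemma cardK : #|{: 'I_n * bool * bool}| = (4 * n)%N.
Proof. by rewrite !card_prod card_ord card_bool; lia. Qed.

Lemma classA (A : {set H}) : (#|T| <= 4 * n * #|A|)%N -> a * #|T|%:R <= #|A|%:R.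
Proof.
move=> h; have h' : #|T|%:R <= (4 * n)%N%:R * #|A|%:R :> R by rewrite -natrM ler_nat.
apply: (le_trans (ler_wpM2l (ltW a0) h')).
rewrite mulrA (mulrC a); apply: (le_trans (ler_wpM2r (ler0n _ _) a4)); by rewrite mul1r.
Qed.


Lemma fall_cat1 (p : seq ('I_n * bool * bool)) t (x : X) : fall (p ++ [:: t]) x = fall p x && (x t.1.1 != t.1.2).
Proof. by rewrite /fall all_cat /= andbT. Qed.

Lemma step d : state d -> (0 < d)%N -> a * (2 ^ n)%N%:R <= (2 ^ d.-1)%N%:R -> SEP \/ state d.-1.
Proof.
move=> [p [C [F [G [[HC cC HF HCc GT] [Hb Hm]]]]]] d0 Hd.
have /card_gt0P [r0 r0F] : (0 < #|F|)%N by rewrite HF.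
pose P := fun (g : H) (k : 'I_n * bool * bool) => (k.1.1 \in F) &&
    [forall x, (x \in C) && (x k.1.1 == k.1.2) ==> (g x == k.2)].
have [[[r s] b] Hk] := @pigeon n _ (r0, true, true) T P (fun g gT => DLclass cC r0F gT).
rewrite cardK in Hk.
set A := [set g in T | P g (r, s, b)] in Hk.
have HA := classA Hk.
have : (0 < #|A|)%N.
  rewrite lt0n; apply/negP => /eqP A0; move: Hk; rewrite A0 muln0; lia.
case/card_gt0P => g1; rewrite inE /P /= => /andP[_ /andP[rF _]].
set S := [set x in C | x r == s].
set C' := [set x in C | x r != s].
have HS : #|S| = #|C'| by apply: (half_card s cC rF).
have HC2 : #|C| = (2 * #|C'|)%N by apply: (half_card2 s cC rF).
have HSd : #|S| = (2 ^ d.-1)%N.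
  move: HC2; rewrite HCc HS; case: (d) d0 => // d' _ /=; rewrite expnS; lia.
have HAb : forall g, g \in A -> forall x, x \in S -> g x = b.
  move=> g; rewrite inE /P /= => /andP[_ /andP[_ /forallP Hg]] x xS.
  by move: xS; rewrite inE => xS; move: (Hg x); rewrite xS => /eqP.
set E := [set g in T | a * #|S|%:R <= (mis S b g)%:R].
have AT : A \subset T by apply/subsetP => g; rewrite inE => /andP[].
case: (lerP (a * #|T|%:R) #|E|%:R) => HE.
  left; apply: (testZ a0 AT _ HA T0 HAb HE).
  by rewrite cardX HSd.
right.
have [cC1 cC2] := cC.
have dn : (d <= n)%N by rewrite -HF; apply: leq_trans (max_card _) _; rewrite card_ord.
exists (p ++ [:: (r, s, b)]), C', (F :\ r), (G :\: E).
split; [split|split].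
- by apply/setP => x; rewrite /C' !inE fall_cat1 HC inE.
- split.
  + move=> x r'; rewrite in_setD1 => /andP[r'r r'F]; rewrite /C' !inE (cC1 x r' r'F) ffunE.
    by have -> : (r == r') = false by rewrite eq_sym; exact: negbTE.
  + move=> x y r'; rewrite /C' !inE => /andP[xC xr] /andP[yC yr].
    rewrite negb_and negbK => /orP[/eqP-> | r'F]; last exact: cC2.
    by move: xr yr; case: (x r); case: (y r); case: (s).
- by move: HF; rewrite (cardsD1 r F) rF add1n => <-.
- by rewrite -HS HSd.
- by apply: subset_trans GT; apply: subsetDl.
- have en : (n - d.-1)%N = (n - d)%N.+1 by case: (d) d0 dn => // d' _ dn' /=; rewrite subnSK.
  rewrite en -natr1.
  have cG : (#|G| <= #|E| + #|G :\: E|)%N.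
    rewrite -(cardsID E G) leq_add2r; apply: subset_leq_card; apply: subsetIr.
  have cGR : #|G|%:R <= #|E|%:R + #|G :\: E|%:R :> R by rewrite -natrD ler_nat.
  apply: (le_trans Hb); rewrite ler_pM2l ?ltr0n ?muln_gt0 ?n0 //.
  rewrite mulrDr mulr1; lra.
- move=> g; rewrite in_setD => /andP[gE gG].
  have gT : g \in T by apply: (subsetP GT).
  have Hmis : (mis S b g)%:R < a * #|S|%:R.
    by move: gE; rewrite /E inE gT /= -ltNge.
  have Hsub : (mism (p ++ [:: (r, s, b)]) g <= mism p g + mis S b g)%N.
    rewrite /mism /mis; apply: leq_trans (leq_card_setU _ _); apply: subset_leq_card.
    apply/subsetP => x; rewrite !inE fall_cat1 eval_cat.
    case fx: (fall p x) => /=.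
      rewrite (eval_fall _ fx) /= negbK => /andP[xr gx].
      by rewrite HC inE fx xr /=; rewrite xr in gx.
    move=> gx; apply/orP; left.
    by rewrite (eval_nfall _ false) ?fx // in gx.
  have e2 : (2 ^ d)%N%:R = 2 * (2 ^ d.-1)%N%:R :> R.
    by case: (d) d0 => // d' _; rewrite expnS natrM.
  have HmR : (mism (p ++ [:: (r, s, b)]) g)%:R <= (mism p g)%:R + (mis S b g)%:R :> R.
    by rewrite -natrD ler_nat.
  have := Hm g gG; rewrite e2 HSd in Hmis *; move: Hmis HmR.
  move=> h1 h2 h3; rewrite mulrBr; rewrite mulrBr in h3; lra.
Qed.

Lemma arith1 m k : (2 * m <= k)%N -> (4 * m <= 2 * k)%N.
Proof. lia. Qed.
Lemma arith2 m1 m2 k : (k < 2 * m1)%N -> (m1 + m2 = k)%N -> (4 * m2 <= 2 * k)%N.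
Proof. lia. Qed.

Lemma arith3 m : (4 * m <= 1)%N -> m = 0%N.
Proof. lia. Qed.

Lemma cardK2 : #|{: ('I_n * bool * bool) * bool}| = (8 * n)%N.
Proof. by rewrite !card_prod card_ord card_bool; lia. Qed.

Lemma final d : state d -> (d = 0%N \/ (2 ^ d.-1)%N%:R < a * (2 ^ n)%N%:R) ->
  tight (@is_DL n) a eps T.
Proof.
move=> [p [C [F [G [[HC cC HF HCc GT] [Hb Hm]]]]]] Hd.
pose r0 : 'I_n := Ordinal n0.
pose Q (k : 'I_n * bool * bool) := [set x in C | x k.1.1 != k.1.2].
pose P := fun (g : H) (kb : ('I_n * bool * bool) * bool) =>
  [forall x, (x \in C) && (x kb.1.1.1 == kb.1.1.2) ==> (g x == kb.1.2)] &&
  (4 * mis (Q kb.1) kb.2 g <= 2 ^ d)%N.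
have Pex : forall g, g \in G -> exists kb, P g kb.
  move=> g gG; have gT := subsetP GT g gG.
  case Ed: d HF HCc => [|d'] HF HCc.
  - have /cards1P [x0 Cx0] : #|C| == 1%N by rewrite HCc.
    exists ((r0, x0 r0, g x0), true); rewrite /P; apply/andP; split.
      by apply/forallP => x; apply/implyP; rewrite Cx0 inE => /andP[/eqP -> _].
    have -> : mis (Q (r0, x0 r0, g x0)) true g = 0%N.
      rewrite /mis; apply/eqP; rewrite cards_eq0; apply/eqP/setP => x.
      rewrite !inE Cx0 inE; case: (x =P x0) => //= ->; by rewrite eqxx.
    by [].
  - have /card_gt0P [r1 r1F] : (0 < #|F|)%N by rewrite HF.
    have [[[r s] c] /andP[rF Hc]] := DLclass cC r1F gT.
    have HQ : #|Q (r, s, c)| = (2 ^ d')%N.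
      by move: (half_card2 s cC rF); rewrite HCc expnS => /eqP; rewrite eqn_mul2l /= => /eqP ->.
    have Hsum : (mis (Q (r, s, c)) true g + mis (Q (r, s, c)) false g)%N = #|Q (r, s, c)|.
      by rewrite addnC -ones_mis0 ones_mis.
    move: Hsum; rewrite HQ => Hsum.
    case: (leqP (2 * mis (Q (r, s, c)) true g) (2 ^ d')) => h.
      by exists ((r, s, c), true); rewrite /P Hc /= Ed expnS; apply: arith1.
    by exists ((r, s, c), false); rewrite /P Hc /= Ed expnS; apply: arith2 h Hsum.
have [[[[r s] c] be] Hk] := @pigeon n _ ((r0, true, true), true) G P Pex.
rewrite cardK2 in Hk.
set G2 := [set g in G | P g (r, s, c, be)] in Hk.
pose h : H := [ffun x => eval_dl (p ++ [:: (r, s, c)]) be x].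
exists h; split.
  by exists (p ++ [:: (r, s, c)]), be => x; rewrite ffunE.
have nR : 0 < n%:R :> R by rewrite ltr0n.
have X2 : (2 ^ n)%N%:R = 2 * (2 ^ n.-1)%N%:R :> R.
  by case: (n) n0 => // n' _; rewrite expnS natrM.
have Hclose : forall g, g \in G2 -> eps_close eps h g.
  move=> g; rewrite inE /P /= => /andP[gG /andP[/forallP Hc Hmis]].
  have Hsub : (#|[set x | h x != g x]| <= mism p g + mis (Q (r, s, c)) be g)%N.
    rewrite /mism /mis; apply: leq_trans (leq_card_setU _ _); apply: subset_leq_card.
    apply/subsetP => x; rewrite !inE ffunE eval_cat.
    case fx: (fall p x) => /=.
      rewrite (eval_fall _ fx) /=.
      have xC : x \in C by rewrite HC inE.
      case xr: (x r == s) => /=.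
        by move: (Hc x); rewrite xC xr /= => /eqP ->; rewrite eqxx.
      by rewrite xC eq_sym.
    move=> gx; apply/orP; left.
    by rewrite (eval_nfall _ false) ?fx // eq_sym in gx.
  have HsubR : #|[set x | h x != g x]|%:R <= (mism p g)%:R + (mis (Q (r, s, c)) be g)%:R :> R.
    by rewrite -natrD ler_nat.
  have Hm1 : (mism p g)%:R <= a * (2 ^ n.-1)%N%:R.
    apply: (le_trans (Hm g gG)); rewrite ler_pM2l // lerBlDr lerDl ler0n //.
  have Hm2 : (mis (Q (r, s, c)) be g)%:R <= a * (2 ^ n.-1)%N%:R.
    case: Hd => [d0|Hd].
      move: Hmis; rewrite d0 expn0 => Hmis.
      have -> : mis (Q (r, s, c)) be g = 0%N by apply: arith3.
      by apply: mulr_ge0; [exact: ltW | exact: ler0n].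
    have Hd2 : (2 ^ d)%N%:R <= 2 * (2 ^ d.-1)%N%:R :> R.
      case: (d) => [|d']; last by rewrite expnS natrM.
      by rewrite /= ?expn0 ?mulr1 ?ler1n.
    have : (4 * mis (Q (r, s, c)) be g)%N%:R <= (2 ^ d)%N%:R :> R by rewrite ler_nat.
    rewrite natrM => H4.
    have : a * (2 ^ n)%N%:R = 2 * (a * (2 ^ n.-1)%N%:R) by rewrite X2; ring.
    move=> h5; timeout 10 lra.
  rewrite /eps_close cardX.
  apply: (le_trans HsubR); apply: le_trans (_ : a * (2 ^ n)%N%:R <= _).
    by rewrite X2; timeout 10 lra.
  by rewrite ler_wpM2r.
have G2sub : G2 \subset [set g in T | eps_close eps h g].
  apply/subsetP => g gG2; rewrite inE (Hclose g gG2) andbT.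
  by move: gG2; rewrite inE => /andP[gG _]; apply: (subsetP GT).
apply: le_trans (_ : #|G2|%:R <= _); last by rewrite ler_nat subset_leq_card.
have A1 : #|G|%:R <= 8 * n%:R * #|G2|%:R :> R by rewrite -natrM -natrM ler_nat.
have nd : (n - d)%N%:R <= n%:R :> R by rewrite ler_nat leq_subr.
move: Hb asmall; rewrite !natrM => Hb as'.
set t := #|T|%:R in Hb as' *; set g := #|G|%:R in Hb A1; set g2 := #|G2|%:R in A1 *.
set N := n%:R in Hb as' A1 nd nR *.
have t0 : 0 <= t by rewrite /t ler0n.
have h1 : 36 * (N * N) * a * t <= t.
  by have := ler_wpM2r t0 as'; rewrite mul1r.
have h3 : 4 * N * (a * t * (n - d)%N%:R) <= 4 * N * (a * t * N).
  apply: ler_wpM2l; first by apply: mulr_ge0; [by [] | exact: ltW].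
  by apply: ler_wpM2l => //; apply: mulr_ge0 => //; exact: ltW.
have h4 : 4 * N * g <= 4 * N * (8 * N * g2).
  by apply: ler_wpM2l => //; apply: mulr_ge0 => //; exact: ltW.
have h5 : (N * N) * (a * t) <= (N * N) * g2.
  rewrite mulrDr in Hb; nra.
by rewrite ler_pM2l ?mulr_gt0 in h5.
Qed.

Lemma predS m k : m = (true + k)%N -> k = m.-1.
Proof. by move=> ->. Qed.
Lemma half_pow m k : (2 ^ m = 2 * k)%N -> (0 < m)%N -> k = (2 ^ m.-1)%N.
Proof. case: m => // m; rewrite expnS => /eqP; rewrite eqn_mul2l /= => /eqP -> //. Qed.

Lemma init : state n.-1.
Proof.
pose r0 : 'I_n := Ordinal n0.
have cT : iscube [set: X] [set: 'I_n].
  by split => [x r _|x y r _ _]; rewrite ?inE.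
have r0T : r0 \in [set: 'I_n] by rewrite inE.
have [[[r s] b] Hk] := @pigeon n _ (r0, true, true) T _ (fun g gT => DLclass cT r0T gT).
rewrite cardK in Hk.
set A := [set g in T | _] in Hk.
have HCe : [set x : X | fall [:: (r, s, b)] x] = [set x in [set: X] | x r != s].
  by apply/setP => x; rewrite !inE /fall /= andbT.
exists [:: (r, s, b)], [set x : X | fall [:: (r, s, b)] x], ([set: 'I_n] :\ r), A.
split; [split|split].
- by [].
- split.
  + move=> x r'; rewrite in_setD1 => /andP[r'r _]; rewrite !inE /fall /= !andbT ffunE.
    by have -> : (r == r') = false by rewrite eq_sym; exact: negbTE.
  + move=> x y r'; rewrite !inE /fall /= !andbT => xr yr.
    rewrite negbK => /eqP ->.
    by move: xr yr; case: (x r); case: (y r); case: (s).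
- have := cardsD1 r [set: 'I_n]; rewrite inE cardsT card_ord; exact: predS.
- have := half_card2 s cT (in_setT r); rewrite cardsT cardX HCe => h.
  exact: half_pow h n0.
- by apply/subsetP => g; rewrite inE => /andP[].
- apply: (@le_trans _ _ ((4 * n)%N%:R * #|A|%:R)); first by rewrite -natrM ler_nat.
  rewrite ler_pM2l ?ltr0n ?muln_gt0 ?n0 // lerDl.
  by apply: mulr_ge0; [apply: mulr_ge0; [exact: ltW|exact: ler0n] | exact: ler0n].
- move=> g; rewrite inE => /andP[_ /andP[_ /forallP Hg]].
  have -> : mism [:: (r, s, b)] g = 0%N.
    rewrite /mism; apply/eqP; rewrite cards_eq0; apply/eqP/setP => x.
    rewrite !inE /fall /= andbT negbK.
    case xr: (x r == s) => //=.
    by move: (Hg x); rewrite inE xr /= => /eqP ->; rewrite eqxx.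
  by rewrite subrr mulr0.
Qed.

Lemma loop d : state d -> SEP \/ exists d', state d' /\
  (d' = 0%N \/ (2 ^ d'.-1)%N%:R < a * (2 ^ n)%N%:R).
Proof.
elim: d => [|d IH] Hs; first by right; exists 0%N; split => //; left.
case: (lerP (a * (2 ^ n)%N%:R) (2 ^ d.+1.-1)%N%:R) => Hd.
  by case: (step Hs (ltn0Sn d) Hd) => [Hsep|Hs']; [left | exact: IH Hs'].
by right; exists d.+1; split => //; right.
Qed.

Lemma main : ~ tight (@is_DL n) a eps T -> SEP.
Proof.
move=> Hnt; case: (loop init) => // -[d [Hs Hd]]; case: Hnt; exact: final Hs Hd.
Qed.

End Main.

Theorem theorem8 (R : realType) (n : nat) (eps : R) :
  (0 < n)%N -> (2 : R) ^- n < eps -> eps < 1 ->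
  separable (@is_DL n) (Num.min (1 / (200 * (n%:R) ^+ 4)) eps) eps.
Proof.
move=> n0 Heps _ T HT Hnt.
set a := Num.min _ _.
have eps0 : 0 < eps by apply: lt_trans Heps; rewrite invr_gt0 exprn_gt0.
have nR : 1 <= n%:R :> R by rewrite ler1n.
have D0 : 0 < 200 * n%:R ^+ 4 :> R by rewrite mulr_gt0 // exprn_gt0 // (lt_le_trans ltr01 nR).
have a0 : 0 < a by rewrite /a lt_min eps0 andbT divr_gt0.
have aeps : a <= eps by rewrite /a ge_min lexx orbT.
have a1 : a * (200 * n%:R ^+ 4) <= 1.
  by rewrite -ler_pdivlMr // /a ge_min lexx.
have asmall : (36 * n ^ 2)%N%:R * a <= 1.
  rewrite natrM natrX.
  have h2 : 1 <= n%:R ^+ 2 :> R by rewrite exprn_ege1.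
  have h4 : n%:R ^+ 2 <= n%:R ^+ 4 :> R.
    by rewrite (_ : n%:R ^+ 4 = n%:R ^+ 2 * n%:R ^+ 2) ?ler_peMr ?(le_trans ler01 h2) // -exprD.
  nra.
have T0 : (0 < #|T|)%N.
  rewrite lt0n; apply/negP => /eqP T0; apply: Hnt.
  exists [ffun x => false]; split; first by exists [::], false => x; rewrite ffunE.
  by rewrite T0 mulr0 ler0n.
exact: (@main R n T a eps n0 a0 aeps asmall HT T0 Hnt).
Qed.
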